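(* Let $\mathcal{R}=(\Sigma,V,\geq_s,\Delta)$ be the term rewriting system described in the context. For every term $\tau\in T[\Sigma,V]$ in normal form (i.e. no rule of $\Delta$ is applicable to any subterm occurrence of $\tau$), $\tau$ is a polynomial $m_1\oplus\cdots\oplus m_k$ such that (1) $m_i>_p m_{i+1}$ for all $i\in[1,k-1]$, and (2) for every monomial $m_i=\alpha_1\cdots\alpha_h$, $\alpha_j\geq_l\alpha_{j+1}$ for all $j\in[1,h-1]$.
   Context: $\mathbb{F}=\mathbb{GF}(2^n)$. Signature $\Sigma=\mathbb{F}\cup\{\oplus,\otimes,f_1,\dots,f_t\}$: elements of $\mathbb{F}$ are constants, $\oplus,\otimes$ binary (field addition and multiplication), $f_1,\dots,f_t$ unary symbols for affine transformations, each $f$ having an associated affine constant $c_f\in\mathbb{F}$ (meaning $f(x\oplus y)=f(x)\oplus f(y)\oplus c_f$ for all $x,y$). $V$ is a set of variables, $\Sigma\cap V=\emptyset$, and $\geq_s$ is a total order on $V\uplus\Sigma$. Terms $T[\Sigma,V]$: smallest set containing $\mathbb{F}\cup V$ and closed under $\oplus$, $\otimes$, $f_j$; $T_{\backslash\oplus}(\Sigma,V)$ = terms not using $\oplus$. A factor is a term in $\mathbb{F}\cup V$ or of the form $f_i(\tau')$ with $\tau'\in T_{\backslash\oplus}(\Sigma,V)$; a monomial is a product $\alpha_1\otimes\cdots\otimes\alpha_k$ ($k\ge1$) of nonzero factors; a polynomial is a sum $m_1\oplus\cdots\oplus m_k$ of monomials (sums and products are treated as flat sequences). Factor order $\geq_l$: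 $\alpha\geq_l\alpha'$ iff (i) $\alpha,\alpha'\in\mathbb{F}\cup V$ and $\alpha\geq_s\alpha'$; or (ii) $\alpha=f(\tau)$, $\alpha'=f'(\tau')$ with $f\geq_s f'$, or $f=f'$ and $\tau\geq_p\tau'$; or (iii) $\alpha=f(\tau)$ and $f\geq_s\alpha'$, or $\alpha'=f(\tau)$ and $\alpha\geq_s f$. Monomial order $\geq_p$: lexicographic comparison (w.r.t. $\geq_l$) of the factor sequences sorted in descending $\geq_l$-order; $m>_p m'$ means $m\geq_p m'$ and the sorted factor sequences differ. Rules $\Delta$ (with $\tau,\tau_1,\tau_2$ terms, $m_i$ monomials, $\alpha_i$ factors, $f$ an affine symbol with constant $c$): R1: $m_1\oplus\cdots\oplus m_k\mapsto m'_1\oplus\cdots\oplus m'_k$ where $(m'_1,\dots,m'_k)={\tt sort}_{\geq_p}(m_1,\dots,m_k)\neq(m_1,\dots,m_k)$; R2: $\alpha_1\cdots\alpha_k\mapsto\alpha'_1\cdots\alpha'_k$ where $(\alpha'_1,\dots,\alpha'_k)={\tt sort}_{\geq_l}(\alpha_1,\dots,\alpha_k)\neq(\alpha_1,\dots,\alpha_k)$; R3: $\tau\oplus\tau\mapsto0$; R4: $\tau\otimes0\mapsto0$; R5: $0\otimes\tau\mapsto0$; R6: $\tau\oplus0\mapsto\tau$; R7: $0\oplus\tau\mapsto\tau$; R8: $\tau\otimes1\mapsto\tau$; R9: $1\otimes\tau\mapsto\tau$; R10: $(\tau_1\oplus\tau_2)\otimes\tau\mapsto(\tau_1\otimes\tau)\oplus(\tau_2\otimes\tau)$;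 R11: $\tau\otimes(\tau_1\oplus\tau_2)\mapsto(\tau\otimes\tau_1)\oplus(\tau\otimes\tau_2)$; R12: $f(\tau_1\oplus\tau_2)\mapsto f(\tau_1)\oplus f(\tau_2)\oplus c$; R13: $f(0)\mapsto c$. A rewriting step replaces one occurrence of a subterm matching a left-hand side by the corresponding right-hand side. *)

(* Defs.v *)
From mathcomp Require Import all_boot all_order all_algebra.
From Stdlib Require List.


Set Implicit Arguments.
Unset Strict Implicit.
Unset Printing Implicit Defensive.

Section TRS.

(* F plays the role of GF(2^n) (the cardinality hypothesis is in the theorem),
   V is the set of variables, t the number of affine symbols f_1..f_t. *)
Variables (F : finFieldType) (V : Type) (t : nat).

Inductive term : Type :=
  | Cst of F
  | Var of V
  | Sum of seq term
  | Prod of seq term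
  | App of 'I_t & term.

(* The symbols of V |+| Sigma, on which the total order >=_s lives. *)
Inductive sym : Type :=
  | SVar of V | SCst of F | SPlus | STimes | SFun of 'I_t.

Definition is_sum (u : term) : bool := if u is Sum _ then true else false.
Definition is_prod (u : term) : bool := if u is Prod _ then true else false.

(* Well-formed (flat) terms of T[Sigma,V]: sums and products have at least two
   arguments, no argument of a sum is a sum, no argument of a product is a product. *)
Inductive wf : term -> Prop :=
  | wf_Cst c : wf (Cst c)
  | wf_Var v : wf (Var v)
  | wf_Sum l : 2 <= size l -> (forall a, List.In a l -> wf a /\ ~~ is_sum a) -> wf (Sum l)
  | wf_Prod l : 2 <= size l -> (forall a, List.In a l -> wf a /\ ~~ is_prod a) -> wf (Prod l)
  | wf_App f a : wf a -> wf (App f a).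

Definition sumlist (u : term) : seq term := if u is Sum l then l else [:: u].
Definition prodlist (u : term) : seq term := if u is Prod l then l else [:: u].
Definition mksum (a b : term) : term := Sum (sumlist a ++ sumlist b).
Definition mkprod (a b : term) : term := Prod (prodlist a ++ prodlist b).

Fixpoint no_plus (u : term) : bool :=
  match u with
  | Cst _ | Var _ => true
  | Sum _ => false
  | Prod l => all no_plus l
  | App _ a => no_plus a
  end.

Definition is_factor (u : term) : bool :=
  match u with
  | Cst _ | Var _ => true
  | App _ a => no_plus a
  | _ => false
  end.

Definition is_zero (u : term) : bool := if u is Cst c then c == 0%R else false.

Definition is_monomial (u : term) : bool :=
  match u with
  | Prod l => (0 < size l) && all (fun a => is_factor a && ~~ is_zero a) l
  | _ => is_factor u && ~~ is_zero u
  end.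

Definition factors (m : term) : seq term := prodlist m.

(* Depth of a term, used as fuel for the (well-founded) mutual recursion
   between >=_l and >=_p. *)
Fixpoint depth (u : term) : nat :=
  match u with
  | Cst _ | Var _ => 0
  | Sum l | Prod l => (foldr (fun a m => maxn (depth a) m) 0 l).+1
  | App _ a => (depth a).+1
  end.

Fixpoint lexge (r : rel term) (s s' : seq term) : bool :=
  match s, s' with
  | _, [::] => true
  | [::], _ :: _ => false
  | a :: s1, b :: s2 =>
      (r a b && ~~ r b a) || (r a b && r b a && lexge r s1 s2)
  end.

Variable ges : rel sym.

Definition atom_sym (u : term) : option sym :=
  match u with
  | Cst c => Some (SCst c)
  | Var v => Some (SVar v)
  | _ => None
  end.

Fixpoint gel_fuel (k : nat) (a b : term) : bool :=
  match k with
  | 0 => false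
  | k'.+1 =>
    match a, b with
    | App f x, App f' y =>
        (ges (SFun f) (SFun f') && (f != f'))
        || ((f == f') &&
            lexge (gel_fuel k') (sort (gel_fuel k') (factors x))
                                (sort (gel_fuel k') (factors y)))
    | App f _, _ =>
        if atom_sym b is Some sb then ges (SFun f) sb else false
    | _, App f' _ =>
        if atom_sym a is Some sa then ges sa (SFun f') else false
    | _, _ =>
        match atom_sym a, atom_sym b with
        | Some sa, Some sb => ges sa sb
        | _, _ => false
        end
    end
  end.

Definition gel (a b : term) : bool := gel_fuel (maxn (depth a) (depth b)).+1 a b.

Definition gep (m m' : term) : bool :=
  lexge gel (sort gel (factors m)) (sort gel (factors m')).

Definition gtp (m m' : term) : Prop :=
  gep m m' /\ sort gel (factors m) <> sort gel (factors m').

Variable cf : 'I_t -> F.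

Definition zero : term := Cst 0%R.
Definition one : term := Cst 1%R.

Inductive rule_step : term -> term -> Prop :=
  | R1 ms : all is_monomial ms -> 2 <= size ms -> sort gep ms <> ms ->
            rule_step (Sum ms) (Sum (sort gep ms))
  | R2 al : all is_factor al -> 2 <= size al -> sort gel al <> al ->
            rule_step (Prod al) (Prod (sort gel al))
  | R3 tau : rule_step (mksum tau tau) zero
  | R4 tau : rule_step (mkprod tau zero) zero
  | R5 tau : rule_step (mkprod zero tau) zero
  | R6 tau : rule_step (mksum tau zero) tau
  | R7 tau : rule_step (mksum zero tau) tau
  | R8 tau : rule_step (mkprod tau one) tau
  | R9 tau : rule_step (mkprod one tau) tau
  | R10 t1 t2 tau : rule_step (mkprod (mksum t1 t2) tau)
                              (mksum (mkprod t1 tau) (mkprod t2 tau))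
  | R11 t1 t2 tau : rule_step (mkprod tau (mksum t1 t2))
                              (mksum (mkprod tau t1) (mkprod tau t2))
  | R12 f t1 t2 : rule_step (App f (mksum t1 t2))
                            (mksum (mksum (App f t1) (App f t2)) (Cst (cf f)))
  | R13 f : rule_step (App f zero) (Cst (cf f)).

(* Subterm occurrences, modulo the flat (associative) representation:
   a contiguous segment (of length >= 2) of a sum / product is a subterm. *)
Inductive occ : term -> term -> Prop :=
  | occ_refl u : occ u u
  | occ_Sum s l1 a l2 : occ s a -> occ s (Sum (l1 ++ a :: l2))
  | occ_Prod s l1 a l2 : occ s a -> occ s (Prod (l1 ++ a :: l2))
  | occ_App s f a : occ s a -> occ s (App f a)
  | occ_Sum_seg l1 l2 l3 : 2 <= size l2 -> occ (Sum l2) (Sum (l1 ++ l2 ++ l3))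
  | occ_Prod_seg l1 l2 l3 : 2 <= size l2 -> occ (Prod l2) (Prod (l1 ++ l2 ++ l3)).

Definition normal_form (u : term) : Prop :=
  forall s, occ s u -> ~ exists r, rule_step s r.

Definition poly_of (ms : seq term) : term :=
  match ms with
  | [::] => zero
  | [:: m] => m
  | _ => Sum ms
  end.

End TRS.

(* Main.v *)
Require Import Defs.
From mathcomp Require Import all_boot all_order all_algebra.
From Stdlib Require List Classical.
Set Implicit Arguments.
Unset Strict Implicit.


Lemma In_nth' (T : Type) (d : T) s i : i < size s -> List.In (nth d s i) s.
Proof. elim: s i => [|x s IH] [|i] //= Hi; [by left | right; exact: IH]. Qed.

Lemma In_split' (T : Type) (a : T) s : List.In a s -> exists l1 l2, s = l1 ++ a :: l2.
Proof.
elim: s => [|x s IH] //= [->|H]; first by exists [::], s.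
by case: (IH H) => l1 [l2 ->]; exists (x :: l1), l2.
Qed.

Lemma In_map_ex (T T' : Type) (f : T -> T') y s :
  List.In y (map f s) -> exists x, List.In x s /\ y = f x.
Proof.
elim: s => [|x s IH] //= [<-|H]; first by exists x; split; [left|].
by case: (IH H) => z [Hz ->]; exists z; split; [right|].
Qed.

Lemma In_mem (T : eqType) (x : T) s : List.In x s -> x \in s.
Proof. elim: s => [|y s IH] //= [->|H]; rewrite inE ?eqxx //; by rewrite IH ?orbT. Qed.

Lemma sorted_sort_P (T : Type) (r : rel T) (P : T -> Prop) s :
  (forall a b, P a -> P b -> r a b || r b a) -> (forall a, List.In a s -> P a) ->
  sorted r (sort r s).
Proof.
case: s => [|x0 s0] // tot HP.
have E := mkseq_nth x0 (x0 :: s0); rewrite /mkseq in E.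
rewrite -E sort_map sorted_map.
apply: (sort_sorted_in (P := fun i => i < size (x0 :: s0))).
  by move=> i j Hi Hj; apply: tot; apply: HP; apply: In_nth'.
by apply/allP => i; rewrite mem_iota.
Qed.

Lemma In_sort (T : Type) (r : rel T) x s : List.In x (sort r s) -> List.In x s.
Proof.
case: s => [|x0 s0] //.
have E := mkseq_nth x0 (x0 :: s0); rewrite /mkseq in E.
move=> H; rewrite -{1}E sort_map in H; case: (In_map_ex H) => i [Hi ->].
by apply: In_nth'; move/In_mem: Hi; rewrite mem_sort mem_iota.
Qed.

Lemma split2 (T : Type) (d : T) l i : i.+1 < size l ->
  l = take i l ++ [:: nth d l i; nth d l i.+1] ++ drop i.+2 l.
Proof.
move=> H; rewrite /= -(drop_nth d H) -drop_nth ?cat_take_drop //.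
exact: ltnW.
Qed.

Lemma seg_in (T : Type) (a : T) l : 2 <= size l -> List.In a l ->
  exists l1 b l3, List.In b l /\ (l = l1 ++ [:: a; b] ++ l3 \/ l = l1 ++ [:: b; a] ++ l3).
Proof.
elim: l => [|x l IH] //= Hs [<-|H].
  case: l Hs {IH} => [|y l] // _; exists [::], y, l; split; [right; left | left] => //.
case: l Hs IH H => [|y l] // Hs IH H.
case: l Hs IH H => [|z l] Hs IH H.
  case: H => [<-|] //; exists [::], x; exists [::]; split; [left|right] => //.
case: (IH erefl H) => l1 [b [l3 [Hb HH]]].
exists (x :: l1), b, l3; split; first by right.
by case: HH => ->; [left|right].
Qed.

Lemma lexge_total (F : finFieldType) (V : Type) (t : nat) (r : rel (term F V t)) (P : term F V t -> Prop) s s' :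
  (forall a b, P a -> P b -> r a b || r b a) ->
  (forall a, List.In a s -> P a) -> (forall a, List.In a s' -> P a) ->
  lexge r s s' || lexge r s' s.
Proof.
move=> tot; elim: s s' => [|a s IH] [|b s'] //= Hs Hs'.
have := tot a b (Hs a (or_introl erefl)) (Hs' b (or_introl erefl)).
case: (r a b); case: (r b a) => //= _.
by apply: IH => x Hx; [apply: Hs; right | apply: Hs'; right].
Qed.

Lemma In_all (T : Type) (p : pred T) s y : all p s -> List.In y s -> p y.
Proof. elim: s => [|x s IH] //= /andP[Hx Hs] [<-|H] //; exact: IH. Qed.

Lemma all_In (T : Type) (p : pred T) s : (forall y, List.In y s -> p y) -> all p s.
Proof.
elim: s => [|x s IH] //= H; rewrite H; last by left.
by rewrite IH // => y Hy; apply: H; right.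
Qed.

Lemma depth_in (F : finFieldType) (V : Type) (t : nat) (y : term F V t) l :
  List.In y l -> depth y <= foldr (fun a m => maxn (depth a) m) 0 l.
Proof.
elim: l => [|a l IH] //= [->|H]; first exact: leq_maxl.
exact: leq_trans (IH H) (leq_maxr _ _).
Qed.

Lemma factors_wf (F : finFieldType) (V : Type) (t : nat) (x y : term F V t) :
  wf x -> no_plus x -> List.In y (factors x) -> [/\ wf y, is_factor y & depth y <= depth x].
Proof.
case: x => [c|v|l|l|f a] Hw Hn /=.
- by case=> // <-.
- by case=> // <-.
- by [].
- move=> Hy; inversion Hw; subst.
  have [Hwy Hpy] := H1 y Hy.
  split => //; last by apply: leq_trans (depth_in Hy) _.
  have Hny : no_plus y := In_all Hn Hy.
  by case: y Hwy Hpy Hny {Hy H1} => //.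
- by case=> // <-.
Qed.

Lemma gel_fuel_total (F : finFieldType) (V : Type) (t : nat) (ges : rel (sym F V t))
  (ges_total : forall x y, ges x y || ges y x) k :
  forall a b : term F V t, wf a -> is_factor a -> wf b -> is_factor b ->
  depth a < k -> depth b < k -> gel_fuel ges k a b || gel_fuel ges k b a.
Proof.
elim: k => [|k IH] a b //.
case: a => [c|v|l|l|f x]; case: b => [c'|v'|l'|l'|g y] //= Ha Hfa Hb Hfb Hda Hdb;
  try exact: ges_total.
case: (eqVneq f g) => [<-|ne].
  rewrite /= !andbF /=.
  have Hx : wf x by inversion Ha.
  have Hy : wf y by inversion Hb.
  set P := fun z : term F V t => [/\ wf z, is_factor z & depth z < k].
  apply: (@lexge_total _ _ _ _ P).
  - by move=> a b [? ? ?] [? ? ?]; apply: IH.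
  - move=> z Hz0; have Hz := In_sort Hz0; have [? ? ?] := factors_wf Hx Hfa Hz; split => //.
    by rewrite ltnS in Hda; apply: leq_ltn_trans Hda.
  - move=> z Hz0; have Hz := In_sort Hz0; have [? ? ?] := factors_wf Hy Hfb Hz; split => //.
    by rewrite ltnS in Hdb; apply: leq_ltn_trans Hdb.
rewrite /= !andbT !orbF.
exact: ges_total.
Qed.

Lemma gel_total (F : finFieldType) (V : Type) (t : nat) (ges : rel (sym F V t))
  (ges_total : forall x y, ges x y || ges y x) (a b : term F V t) :
  wf a -> is_factor a -> wf b -> is_factor b -> gel ges a b || gel ges b a.
Proof.
move=> Ha Hfa Hb Hfb; rewrite /gel (maxnC (depth b)).
by apply: gel_fuel_total => //; rewrite ltnS ?leq_maxl ?leq_maxr.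
Qed.

Lemma monomial_factors (F : finFieldType) (V : Type) (t : nat) (m y : term F V t) :
  wf m -> is_monomial m -> List.In y (factors m) -> wf y /\ is_factor y.
Proof.
case: m => [c|v|l|l|f a] Hw Hm /=; try by case=> // <-; move/andP: Hm => [].
move=> Hy; inversion Hw; subst; split; first by case: (H1 y Hy).
by case/andP: Hm => _ Hall; case/andP: (In_all Hall Hy).
Qed.

Lemma gep_total (F : finFieldType) (V : Type) (t : nat) (ges : rel (sym F V t))
  (ges_total : forall x y, ges x y || ges y x) (m m' : term F V t) :
  wf m -> is_monomial m -> wf m' -> is_monomial m' -> gep ges m m' || gep ges m' m.
Proof.
move=> Hw Hm Hw' Hm'; rewrite /gep.
apply: (@lexge_total _ _ _ _ (fun z => wf z /\ is_factor z)).
- by move=> a b [? ?] [? ?]; apply: gel_total.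
- by move=> z Hz0; apply: monomial_factors (In_sort Hz0).
- by move=> z Hz0; apply: monomial_factors (In_sort Hz0).
Qed.

Lemma wf_prod_size (F : finFieldType) (V : Type) (t : nat) (l : seq (term F V t)) :
  wf (Prod l) -> 2 <= size l.
Proof. by move=> H; inversion H. Qed.

Lemma mono_eq (F : finFieldType) (V : Type) (t : nat) (m m' : term F V t) :
  wf m -> wf m' -> factors m = factors m' -> m = m'.
Proof.
case: m => [c|v|l|l|f a]; case: m' => [c'|v'|l'|l'|g b] //= Hw Hw' E; try by case: E; intros; subst.
all: try by move: (wf_prod_size Hw'); rewrite -E.
all: by move: (wf_prod_size Hw); rewrite E.
Qed.

Section X.
Lemma sort1 (T : Type) (r : rel T) x : sort r [:: x] = [:: x].
Proof. by []. Qed.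
End X.

Lemma sumlist_ns (F : finFieldType) (V : Type) (t : nat) (b : term F V t) :
  ~~ is_sum b -> sumlist b = [:: b].
Proof. by case: b. Qed.

Lemma prodlist_np (F : finFieldType) (V : Type) (t : nat) (b : term F V t) :
  ~~ is_prod b -> prodlist b = [:: b].
Proof. by case: b. Qed.

Lemma mono_ns (F : finFieldType) (V : Type) (t : nat) (b : term F V t) :
  is_monomial b -> ~~ is_sum b.
Proof. by case: b. Qed.

Lemma mono_no_plus (F : finFieldType) (V : Type) (t : nat) (b : term F V t) :
  is_monomial b -> no_plus b.
Proof.
case: b => //= [l|f a]; last by rewrite andbT.
case/andP=> _ H; apply: all_In => y Hy.
by case/andP: (In_all H Hy); case: y {Hy}.
Qed.

Lemma mono_np (F : finFieldType) (V : Type) (t : nat) (b : term F V t) :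
  ~~ is_prod b -> is_monomial b = is_factor b && ~~ is_zero b.
Proof. by case: b. Qed.

Lemma mksum_split (F : finFieldType) (V : Type) (t : nat) (ms : seq (term F V t)) :
  all (@is_monomial F V t) ms -> 2 <= size ms -> exists t1 t2, mksum t1 t2 = Sum ms.
Proof.
case: ms => [|m1 [|m2 rest]] //= /andP[H1 /andP[H2 H3]] _.
exists m1; case: rest H3 => [|m3 rest] H3.
  by exists m2; rewrite /mksum !sumlist_ns ?mono_ns.
by exists (Sum [:: m2, m3 & rest]); rewrite /mksum sumlist_ns ?mono_ns.
Qed.

Lemma NF_Sum (F : finFieldType) (V : Type) (t : nat) ges cf (l : seq (term F V t)) a :
  normal_form ges cf (Sum l) -> List.In a l -> normal_form ges cf a.
Proof. move=> H Ha; case: (In_split' Ha) => l1 [l2 E] s Hs; apply: H; rewrite E; exact: occ_Sum. Qed.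

Lemma NF_Prod (F : finFieldType) (V : Type) (t : nat) ges cf (l : seq (term F V t)) a :
  normal_form ges cf (Prod l) -> List.In a l -> normal_form ges cf a.
Proof. move=> H Ha; case: (In_split' Ha) => l1 [l2 E] s Hs; apply: H; rewrite E; exact: occ_Prod. Qed.

Lemma sorted_factors (F : finFieldType) (V : Type) (t : nat) ges cf
  (ges_total : forall x y, ges x y || ges y x) (m : term F V t) :
  wf m -> is_monomial m -> normal_form ges cf m ->
  sort (gel ges) (factors m) = factors m /\ sorted (gel ges) (factors m).
Proof.
move=> Hw Hm HN.
case E: m Hw Hm HN => [c|v|l|l|f a] Hw Hm HN; subst; rewrite /factors /= ?sort1 //.
have Hs : sort (gel ges) l = l.
  apply: Classical_Prop.NNPP => Hne; apply: (HN _ (occ_refl _)).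
  exists (Prod (sort (gel ges) l)); apply: R2 => //.
  - case/andP: Hm => _ Hall; apply: all_In => y Hy; by case/andP: (In_all Hall Hy).
  - exact: wf_prod_size.
split => //; rewrite -{1}Hs.
apply: (@sorted_sort_P _ _ (fun z => wf z /\ is_factor z)).
  by move=> a b [? ?] [? ?]; apply: gel_total.
by move=> z Hz; apply: (monomial_factors Hw Hm Hz).
Qed.

Definition Good (F : finFieldType) (V : Type) (t : nat) (ges : rel (sym F V t))
  (tau : term F V t) (ms : seq (term F V t)) :=
    [/\ tau = poly_of ms,
        all (@is_monomial F V t) ms,
        (forall i, i.+1 < size ms ->
           gtp ges (nth (zero F V t) ms i) (nth (zero F V t) ms i.+1))
      & (forall m, List.In m ms ->
           forall j, j.+1 < size (factors m) ->
             gel ges (nth (zero F V t) (factors m) j)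
                     (nth (zero F V t) (factors m) j.+1))].

Lemma good_cases (F : finFieldType) (V : Type) (t : nat) ges (a : term F V t) ms :
  Good ges a ms ->
  a = zero F V t \/ is_monomial a \/ (a = Sum ms /\ 2 <= size ms /\ all (@is_monomial F V t) ms).
Proof.
case=> -> Hm _ _; case: ms Hm => [|m1 [|m2 rest]] Hm /=; first by left.
  by right; left; case/andP: Hm.
by right; right.
Qed.

Lemma main (F : finFieldType) (V : Type) (t : nat) (ges : rel (sym F V t))
  (ges_total : forall x y, ges x y || ges y x) (cf : 'I_t -> F) k :
  forall tau : term F V t, depth tau < k -> wf tau -> normal_form ges cf tau ->
  exists ms, Good ges tau ms.
Proof.
elim: k => [|k IH] // tau.
case: tau => [c|v|l|l|f a] Hd Hw HN.
- case: (eqVneq c 0%R) => [->|nz]; first by exists [::]; split.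
  exists [:: Cst V t c]; split => //=; first by rewrite nz.
  by move=> m [<-|] // [|j].
- exists [:: Var F t v]; split => //=.
  by move=> m [<-|] // [|j].
- rewrite /= ltnS in Hd.
  have Hs2 : 2 <= size l by inversion Hw.
  have Hel : forall a, List.In a l -> wf a /\ ~~ is_sum a by inversion Hw.
  have Hmon : forall a, List.In a l -> is_monomial a.
    move=> a Ha; have [Hwa Hna] := Hel a Ha; have HNa := NF_Sum HN Ha.
    have Hda : depth a < k by apply: leq_ltn_trans (depth_in Ha) Hd.
    have [ms Hg] := IH a Hda Hwa HNa.
    case: (good_cases Hg) => [Ez|[//|[Es _]]]; last by rewrite Es in Hna.
    exfalso; have [l1 [b [l3 [Hb [E|E]]]]] := seg_in Hs2 Ha.
    + apply: (HN (Sum [:: a; b])); first by rewrite E; apply: occ_Sum_seg.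
      exists b; have H := @R7 _ _ _ ges cf b.
      rewrite /mksum /= sumlist_ns in H; last by case: (Hel b Hb).
      by rewrite Ez.
    + apply: (HN (Sum [:: b; a])); first by rewrite E; apply: occ_Sum_seg.
      exists b; have H := @R6 _ _ _ ges cf b.
      rewrite /mksum /= sumlist_ns in H; last by case: (Hel b Hb).
      by rewrite Ez.
  have Hsort : sort (gep ges) l = l.
    apply: Classical_Prop.NNPP => Hne; apply: (HN _ (occ_refl _)).
    exists (Sum (sort (gep ges) l)); apply: R1 => //.
    exact: all_In.
  have Hsorted : sorted (gep ges) l.
    rewrite -Hsort; apply: (@sorted_sort_P _ _ (fun z => wf z /\ is_monomial z)).
      by move=> x y [? ?] [? ?]; apply: gep_total.
    by move=> z Hz; split; [case: (Hel z Hz) | apply: Hmon].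
  move/(sortedP (zero F V t)): Hsorted => Hso.
  exists l; split.
  + by case: l Hs2 {Hel Hmon Hsort Hso HN Hd Hw} => [|x [|y r]].
  + exact: all_In.
  + move=> i Hi; split; first exact: Hso.
    move=> E.
    have Hi' : i < size l by apply: ltnW.
    have Ini := In_nth' (zero F V t) Hi'.
    have Inj := In_nth' (zero F V t) Hi.
    set mi := nth _ l i in E Ini Inj *; set mj := nth _ l i.+1 in E Ini Inj *.
    have [Ei _] := sorted_factors ges_total (proj1 (Hel _ Ini)) (Hmon _ Ini) (NF_Sum HN Ini).
    have [Ej _] := sorted_factors ges_total (proj1 (Hel _ Inj)) (Hmon _ Inj) (NF_Sum HN Inj).
    rewrite Ei Ej in E.
    have Emm := mono_eq (proj1 (Hel _ Ini)) (proj1 (Hel _ Inj)) E.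
    have El := split2 (zero F V t) Hi.
    apply: (HN (Sum [:: mi; mj])); first by rewrite El; apply: occ_Sum_seg.
    exists (zero F V t); have H := @R3 _ _ _ ges cf mi.
    rewrite /mksum sumlist_ns in H; last exact: mono_ns (Hmon _ Ini).
    by rewrite -Emm.
  + move=> m Hm.
    have [_ Hs] := sorted_factors ges_total (proj1 (Hel _ Hm)) (Hmon _ Hm) (NF_Sum HN Hm).
    by move/(sortedP (zero F V t)): Hs.
- rewrite /= ltnS in Hd.
  have Hs2 : 2 <= size l by inversion Hw.
  have Hel : forall a, List.In a l -> wf a /\ ~~ is_prod a by inversion Hw.
  have Hmon : forall a, List.In a l -> is_monomial a.
    move=> a Ha; have [Hwa Hna] := Hel a Ha; have HNa := NF_Prod HN Ha.
    have Hda : depth a < k by apply: leq_ltn_trans (depth_in Ha) Hd.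
    have [ms Hg] := IH a Hda Hwa HNa.
    case: (good_cases Hg) => [Ez|[//|[Es [Hs Hall]]]].
      exfalso; have [l1 [b [l3 [Hb [E|E]]]]] := seg_in Hs2 Ha.
      + apply: (HN (Prod [:: a; b])); first by rewrite E; apply: occ_Prod_seg.
        exists (zero F V t); have H := @R5 _ _ _ ges cf b.
        rewrite /mkprod /= prodlist_np in H; last by case: (Hel b Hb).
        by rewrite Ez.
      + apply: (HN (Prod [:: b; a])); first by rewrite E; apply: occ_Prod_seg.
        exists (zero F V t); have H := @R4 _ _ _ ges cf b.
        rewrite /mkprod /= prodlist_np in H; last by case: (Hel b Hb).
        by rewrite Ez.
    exfalso; have [t1 [t2 Et]] := mksum_split Hall Hs.
    have [l1 [b [l3 [Hb [E|E]]]]] := seg_in Hs2 Ha.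
    + apply: (HN (Prod [:: a; b])); first by rewrite E; apply: occ_Prod_seg.
      eexists; have H := @R10 _ _ _ ges cf t1 t2 b.
      rewrite /mkprod Et /= prodlist_np in H; last by case: (Hel b Hb).
      by rewrite Es; exact: H.
    + apply: (HN (Prod [:: b; a])); first by rewrite E; apply: occ_Prod_seg.
      eexists; have H := @R11 _ _ _ ges cf t1 t2 b.
      rewrite /mkprod Et /= prodlist_np in H; last by case: (Hel b Hb).
      by rewrite Es; exact: H.
  have Hmt : is_monomial (Prod l).
    rewrite /= ltnW //=; apply: all_In => y Hy.
    by rewrite -mono_np ?Hmon //; case: (Hel y Hy).
  exists [:: Prod l]; split => //=; first by rewrite andbT.
  move=> m [<-|] // j Hj.
  have [_ Hs] := sorted_factors ges_total Hw Hmt HN.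
  by move/(sortedP (zero F V t)): Hs => /(_ j Hj).
- have Hwa : wf a by inversion Hw.
  have HNa : normal_form ges cf a by move=> s Hs; apply: HN; apply: occ_App.
  have [ms Hg] := IH a Hd Hwa HNa.
  case: (good_cases Hg) => [Ez|[Hm|[Es [Hs Hall]]]].
  + by exfalso; apply: (HN _ (occ_refl _)); exists (Cst V t (cf f)); rewrite Ez; apply: R13.
  + exists [:: App f a]; split => //=; first by rewrite mono_no_plus.
    by move=> m [<-|] // [|j].
  + exfalso; apply: (HN _ (occ_refl _)).
    have [t1 [t2 E]] := mksum_split Hall Hs.
    by eexists; rewrite Es -E; apply: R12.
Qed.

Theorem lemma1 (n : nat) (F : finFieldType) (HF : #|F| = 2 ^ n)
  (V : Type) (t : nat) (ges : rel (sym F V t))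
  (ges_refl : forall x, ges x x)
  (ges_antisym : forall x y, ges x y -> ges y x -> x = y)
  (ges_trans : forall x y z, ges x y -> ges y z -> ges x z)
  (ges_total : forall x y, ges x y || ges y x)
  (cf : 'I_t -> F)
  (tau : term F V t) :
  wf tau ->
  normal_form ges cf tau ->
  exists ms : seq (term F V t),
    [/\ tau = poly_of ms,
        all (@is_monomial F V t) ms,
        (forall i, i.+1 < size ms ->
           gtp ges (nth (zero F V t) ms i) (nth (zero F V t) ms i.+1))
      & (forall m, List.In m ms ->
           forall j, j.+1 < size (factors m) ->
             gel ges (nth (zero F V t) (factors m) j)
                     (nth (zero F V t) (factors m) j.+1))].
Proof.
move=> Hw HN.
have [ms Hg] := @main F V t ges ges_total cf (depth tau).+1 tau (ltnSn _) Hw HN.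
by exists ms.
Qed.
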